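(* Let $G=(V,E,\omega)\in\mathcal{G}$ and $\gamma\geq 0$. Let $\{\tau_k\}_{k\in\mathbb{N}}$ be a sequence of positive real numbers with $\tau_k\to0$ as $k\to\infty$, and let $\{u_k\}_{k\in\mathbb{N}}\subset\mathcal K$ be a sequence for which there is $C>0$ such that $\tilde J_{\tau_k}(u_k)\leq C$ for all $k\in\mathbb{N}$. Then there exist a subsequence $\{u_{k_l}\}_{l\in\mathbb{N}}$ and $u\in\mathcal V^b$ such that $u_{k_l}\to u$ as $l\to\infty$.
   Context: $\mathcal{G}$ is the set of finite, simple, connected, undirected, edge-weighted graphs $G=(V,E,\omega)$ with $V=\{1,\dots,n\}$, $n\geq 2$, weights $\omega_{ij}=\omega_{ji}>0$ for $(i,j)\in E$ and $\omega_{ij}=0$ otherwise. Degrees $d_i=\sum_j\omega_{ij}$. $\mathcal V$: functions $u:V\to\mathbb R$. Fixed $r\in[0,1]$; $\langle u,v\rangle_{\mathcal V}=\sum_i d_i^r u_iv_i$. $(\Delta u)_i=d_i^{-r}\sum_j\omega_{ij}(u_i-u_j)$. $\chi_S$ indicator of $S$. $\mathcal M(u)=\sum_i d_i^ru_i$, $\mathcal A(u)=\frac{\mathcal M(u)}{\sum_i d_i^r}\chi_V$. For $u\in\mathcal V$ let $\varphi$ be the unique solution of $\Delta\varphi=u-\mathcal A(u)$, $\mathcal M(\varphi)=0$, and $Lu:=\Delta u+\gamma\varphi$; $e^{-\tau L}$ its exponential. $\mathcal V^b$: $\{0,1\}$-valued functions; $\mathcal K$: $[0,1]$-valued functions. For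 $\tau>0$, $\tilde J_\tau(u)=\frac1\tau\langle\chi_V-u,e^{-\tau L}u\rangle_{\mathcal V}$ for $u\in\mathcal K$. Convergence in $\mathcal V$ is in the norm induced by $\langle\cdot,\cdot\rangle_{\mathcal V}$. *)

(* Defs.v *)
From HB Require Import structures.
From mathcomp Require Import all_boot all_order all_algebra.
From mathcomp Require Import all_classical all_reals all_analysis.
Set Implicit Arguments. Unset Strict Implicit. Unset Printing Implicit Defensive.
Import Order.TTheory GRing.Theory Num.Theory.
Import numFieldNormedType.Exports.
Local Open Scope ring_scope.
Local Open Scope classical_set_scope.

Section GraphDefs.
Variables (R : realType) (n : nat).

(* G = (V, E, w) in the class \mathcal G, V = 'I_n, edges = pairs with w i j > 0 *)
Definition is_graph (w : 'I_n -> 'I_n -> R) : Prop :=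
  [/\ (2 <= n)%N,
      (forall i j, w i j = w j i),
      (forall i j, 0 <= w i j),
      (forall i, w i i = 0) &
      (forall i j, connect (fun a b => 0 < w a b) i j)].

Definition deg (w : 'I_n -> 'I_n -> R) (i : 'I_n) : R := \sum_j w i j.

Definition ipV (r : R) w (u v : 'I_n -> R) : R :=
  \sum_i (deg w i `^ r) * u i * v i.
Definition normV (r : R) w (u : 'I_n -> R) : R := Num.sqrt (ipV r w u u).

Definition lapl (r : R) w (u : 'I_n -> R) : 'I_n -> R :=
  fun i => (deg w i `^ r)^-1 * \sum_j w i j * (u i - u j).

Definition mass (r : R) w (u : 'I_n -> R) : R := \sum_i deg w i `^ r * u i.

Definition avg (r : R) w (u : 'I_n -> R) : 'I_n -> R :=
  fun _ => mass r w u / \sum_i deg w i `^ r.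

Definition phi (r : R) w (u : 'I_n -> R) : 'I_n -> R :=
  get [set p : 'I_n -> R | lapl r w p = (fun i => u i - avg r w u i)
                          /\ mass r w p = 0].

Definition Lop (r gam : R) w (u : 'I_n -> R) : 'I_n -> R :=
  fun i => lapl r w u i + gam * phi r w u i.

Definition Lmx (r gam : R) w : 'M[R]_n :=
  \matrix_(i, j) Lop r gam w (fun k => (k == j)%:R) i.

Definition expmx (A : 'M[R]_n) : 'M[R]_n :=
  \matrix_(i, j) limn (fun N => (\sum_(k < N) ((k`!)%:R)^-1 *: A ^+ k) i j).

Definition mxapp (M : 'M[R]_n) (u : 'I_n -> R) : 'I_n -> R :=
  fun i => \sum_j M i j * u j.

Definition heatL (r gam : R) w (tau : R) (u : 'I_n -> R) : 'I_n -> R :=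
  mxapp (expmx (- tau *: Lmx r gam w)) u.

Definition Jtilde (r gam : R) w (tau : R) (u : 'I_n -> R) : R :=
  tau^-1 * ipV r w (fun i => 1 - u i) (heatL r gam w tau u).

End GraphDefs.

(* Main.v *)
Require Import Defs.
From HB Require Import structures.
From mathcomp Require Import all_boot all_order all_algebra.
From mathcomp Require Import all_classical all_reals all_analysis.
From mathcomp Require Import ring lra.
Import Order.TTheory GRing.Theory Num.Theory.
Import numFieldNormedType.Exports.
Set Implicit Arguments. Unset Strict Implicit. Unset Printing Implicit Defensive.
Local Open Scope ring_scope.
Local Open Scope classical_set_scope.

Lemma incr_lt (f : nat -> nat) : (forall l, (f l < f l.+1)%N) ->
  forall a b, (a < b)%N -> (f a < f b)%N.
Proof.
move=> hf a; elim=> // b IH; rewrite ltnS leq_eqVlt => /orP[/eqP->|/IH h] //.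
exact: ltn_trans h (hf b).
Qed.

Lemma incr_ge (f : nat -> nat) : (forall l, (f l < f l.+1)%N) ->
  forall l, (l <= f l)%N.
Proof. move=> hf; elim=> // l IH; exact: leq_ltn_trans IH (hf l). Qed.

Lemma subseq_cvg (R : realType) (f : nat -> nat) (uu : nat -> R) (a : R) :
  (forall l, (f l < f l.+1)%N) -> uu @ \oo --> a -> (uu \o f) @ \oo --> a.
Proof.
move=> hf hu; apply: cvg_comp hu.
move=> P [N _ HN]; exists N => // m /= Nm; apply: HN => /=.
exact: leq_trans Nm (incr_ge hf m).
Qed.

Lemma bw_multi (R : realType) (n : nat) (u : nat -> 'I_n -> R) :
  (forall k i, 0 <= u k i <= 1) ->
  forall m, (m <= n)%N -> exists f : nat -> nat,
    (forall l, (f l < f l.+1)%N) /\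
    (forall i : 'I_n, (i < m)%N -> cvgn ((fun k => u k i) \o f)).
Proof.
move=> hu; elim=> [|m IH] hm.
  by exists id; split.
have [f [hf hc]] := IH (ltnW hm).
pose im : 'I_n := Ordinal hm.
have bnd : bounded_fun (fun l => u (f l) im).
  exists 1; split; first exact: num_real.
  move=> x x1 l; have /andP[h0 h1] := hu (f l) im.
  move=> _ /=; rewrite ger0_norm //; exact: le_trans h1 (ltW x1).
have [g hg hcg] := bolzano_weierstrass bnd.
have hg' : forall l, (g l < g l.+1)%N.
  move=> l; have := (increasing_seqP g).2 hg l. by [].
exists (f \o g); split.
  by move=> l /=; apply: incr_lt => //.
move=> i; rewrite ltnS leq_eqVlt => /orP[/eqP hi|hi].
  have -> : i = im by apply: val_inj.
  exact: hcg.
have := hc i hi => /cvg_ex[/= a ha]; apply/cvg_ex; exists a.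
exact: (subseq_cvg hg' ha).
Qed.
Lemma id_entry (R : realType) n (i j : 'I_n) : (1 : 'M[R]_n) i j = (i == j)%:R.
Proof. by rewrite mxE. Qed.

Lemma mx_pow_bound (R : realType) n (A : 'M[R]_n) b : 0 <= b ->
  (forall i j, `|A i j| <= b) -> forall k i j, `|(A ^+ k) i j| <= (n%:R * b) ^+ k.
Proof.
move=> b0 hA; elim=> [|k IH] i j.
  rewrite expr0 id_entry; case: (i == j); by rewrite ?normr1 ?normr0.
rewrite exprSr -mulmxE mxE.
apply: (le_trans (ler_norm_sum _ _ _)).
apply: (@le_trans _ _ (\sum_(l < n) (n%:R * b) ^+ k * b)).
  apply: ler_sum => l _; rewrite normrM; apply: ler_pM => //.
rewrite sumr_const card_ord -mulr_natr exprSr le_eqVlt; apply/orP; left; apply/eqP; ring.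
Qed.

Lemma geo_bound (R : realType) (x : R) : 0 <= x -> x <= 1/2 ->
  forall M, \sum_(k < M) x ^+ k <= 2 - 2 * x ^+ M.
Proof.
move=> x0 x1; elim=> [|M IH]; first by rewrite big_ord0 expr0 mulr1 subrr.
rewrite big_ord_recr /=.
have hp : 0 <= x ^+ M by apply: exprn_ge0.
rewrite exprSr.
have : x ^+ M * (2 * x - 1) <= 0.
  rewrite mulr_ge0_le0 //; lra.
nra.
Qed.

Lemma expmx_bound (R : realType) n (B : 'M[R]_n) b i j : 0 <= b ->
  (forall i j, `|B i j| <= b) -> n%:R * b <= 1/2 ->
  `|expmx B i j - (i == j)%:R| <= 2 * (n%:R * b).
Proof.
move=> b0 hB hx.
set x := n%:R * b in hx *.
have x0 : 0 <= x by rewrite mulr_ge0.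
pose t := fun k : nat => (k`!%:R)^-1 * (B ^+ k) i j.
have ht : forall k, `|t k| <= x ^+ k / k`!%:R.
  move=> k; rewrite /t normrM normfV normr_nat mulrC.
  apply: ler_pM; rewrite ?invr_ge0 //.
  exact: mx_pow_bound.
have hE : expmx B i j = limn (series t).
  rewrite /expmx mxE (_ : (fun N : nat => _) = series t) //.
  apply/funext => N; rewrite summxE /series /= big_mkord.
  by apply: eq_bigr => k _; rewrite mxE.
have cv : cvgn (series t).
  apply: normed_cvg; apply: (@series_le_cvg _ _ (exp_coeff x)).
  - by move=> k; exact: normr_ge0.
  - by move=> k; exact: exp_coeff_ge0.
  - by move=> k; exact: ht.
  - exact: is_cvg_series_exp_coeff.
have hN : forall N, `|series t N.+1 - (i == j)%:R| <= 2 * x.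
  move=> N; rewrite /series /= big_nat_recl // /t fact0 invr1 mul1r expr0 id_entry.
  rewrite addrAC subrr add0r.
  apply: (le_trans (ler_norm_sum _ _ _)).
  apply: (@le_trans _ _ (\sum_(0 <= k < N) x ^+ k.+1)).
    apply: ler_sum => k _; apply: le_trans (ht k.+1) _.
    rewrite ler_pdivrMr ?ltr0n ?fact_gt0 // ler_peMr ?exprn_ge0 // ler1n fact_gt0 //.
  rewrite big_mkord.
  under eq_bigr do rewrite exprS.
  rewrite -mulr_sumr.
  have := geo_bound x0 hx N.
  have : 0 <= x ^+ N by apply: exprn_ge0.
  nra.
have ev : \forall N \near \oo, `|series t N - (i == j)%:R| <= 2 * x.
  by exists 1%N => // [[|N]] // _; exact: hN.
rewrite hE ler_norml; apply/andP; split.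
  rewrite lerBrDr; apply: limr_ge cv _; apply: filterS ev => N.
  rewrite ler_norml => /andP[h1 h2]; lra.
rewrite lerBlDr; apply: limr_le cv _; apply: filterS ev => N.
rewrite ler_norml => /andP[h1 h2]; lra.
Qed.
Lemma cvg_sumI (R : realType) n (F : 'I_n -> nat -> R) (a : 'I_n -> R) :
  (forall i, F i @ \oo --> a i) -> (fun l => \sum_i F i l) @ \oo --> \sum_i a i.
Proof.
move=> h; apply: (@cvg_big _ _ +%R 0 predT add_continuous).
move=> i _; exact: h.
Qed.

Lemma entry_le (R : realType) n (A : 'M[R]_n) i j :
  `|A i j| <= \sum_i' \sum_j' `|A i' j'|.
Proof.
rewrite (bigD1 i) //= (bigD1 j) //=.
have h1 : 0 <= \sum_(j' | j' != j) `|A i j'| by apply: sumr_ge0.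
have h2 : 0 <= \sum_(i' | i' != i) \sum_j' `|A i' j'|.
  by apply: sumr_ge0 => k _; apply: sumr_ge0.
lra.
Qed.

Lemma deg_gt0 (R : realType) n (w : 'I_n -> 'I_n -> R) :
  is_graph w -> forall i, 0 < deg w i.
Proof.
case=> n2 _ w0 _ hc i.
have h0 : (0 < n)%N by apply: ltn_trans n2.
have [j ji] : exists j : 'I_n, j != i.
  case: (eqVneq i (Ordinal h0)) => [->|ne].
    by exists (Ordinal n2).
  by exists (Ordinal h0); rewrite eq_sym.
have := hc i j => /connectP[p hp hl].
case: p hp hl => [_ /= hl|a p /= /andP[hia _] _]; first by rewrite hl eqxx in ji.
rewrite /deg (bigD1 a) //=.
have : 0 <= \sum_(k | k != a) w i k by apply: sumr_ge0.
lra.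
Qed.

Lemma mxapp_close (R : realType) n (E : 'M[R]_n) (u : 'I_n -> R) e i :
  (forall i j, `|E i j - (i == j)%:R| <= e) -> (forall j, 0 <= u j <= 1) ->
  `|mxapp E u i - u i| <= n%:R * e.
Proof.
move=> hE hu.
have -> : mxapp E u i - u i = \sum_j (E i j - (i == j)%:R) * u j.
  rewrite /mxapp.
  have -> : u i = \sum_j (i == j)%:R * u j.
    rewrite (bigD1 i) //= eqxx mul1r big1 ?addr0 // => j /negbTE.
    by rewrite eq_sym => ->; rewrite mul0r.
  by rewrite -sumrB; apply: eq_bigr => j _; rewrite mulrBl.
apply: (le_trans (ler_norm_sum _ _ _)).
apply: (@le_trans _ _ (\sum_(j < n) e)); last by rewrite sumr_const card_ord mulr_natl.
apply: ler_sum => j _; rewrite normrM.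
have /andP[h0 h1] := hu j.
rewrite [`|u j|]ger0_norm //.
have := hE i j; have := normr_ge0 (E i j - (i == j)%:R).
nra.
Qed.

Lemma heat_close (R : realType) n (w : 'I_n -> 'I_n -> R) r gam tau
   (u : 'I_n -> R) i a :
  0 <= tau -> 0 <= a -> (forall i j, `|Lmx r gam w i j| <= a) ->
  n%:R * (tau * a) <= 1/2 -> (forall j, 0 <= u j <= 1) ->
  `|heatL r gam w tau u i - u i| <= n%:R * (2 * (n%:R * (tau * a))).
Proof.
move=> t0 a0 hL hx hu; rewrite /heatL.
apply: mxapp_close => // i' j'.
apply: expmx_bound => //; first exact: mulr_ge0.
move=> i1 j1; rewrite mxE normrM normrN (ger0_norm t0).
by apply: ler_pM.
Qed.

Theorem theorem5p23 (R : realType) (n : nat) (w : 'I_n -> 'I_n -> R)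
    (r gam : R) (tau : nat -> R) (u : nat -> 'I_n -> R) (C : R) :
  is_graph w ->
  0 <= r <= 1 ->
  0 <= gam ->
  (forall k, 0 < tau k) ->
  tau @ \oo --> (0 : R) ->
  (forall k i, 0 <= u k i <= 1) ->
  0 < C ->
  (forall k, Jtilde r gam w (tau k) (u k) <= C) ->
  exists (kl : nat -> nat) (v : 'I_n -> R),
    [/\ (forall l, (kl l < kl l.+1)%N),
        (forall i, v i = 0 \/ v i = 1) &
        (fun l => normV r w (fun i => u (kl l) i - v i)) @ \oo --> (0 : R)].
Proof.
move=> hG hr hgam htau htau0 hu hC hJ.
have [f [hf hc]] := bw_multi hu (leqnn n).
pose v i := limn ((fun k => u k i) \o f).
have hv : forall i, (fun l => u (f l) i) @ \oo --> v i.
  by move=> i; exact: (hc i (ltn_ord i)).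
have v01 : forall i, 0 <= v i <= 1.
  move=> i; apply/andP; split.
    apply: (ler_cvg_to (cvg_cst 0) (hv i)); apply: nearW => l.
    by have /andP[] := hu (f l) i.
  apply: (ler_cvg_to (hv i) (cvg_cst (1 : R))); apply: nearW => l.
  by have /andP[] := hu (f l) i.
pose a := \sum_i \sum_j `|Lmx r gam w i j|.
have a0 : 0 <= a by apply: sumr_ge0 => i _; apply: sumr_ge0.
have hL : forall i j, `|Lmx r gam w i j| <= a by move=> i j; exact: entry_le.
have ht : (fun l => tau (f l)) @ \oo --> 0 := subseq_cvg hf htau0.
pose K := n%:R * (2 * (n%:R * a)).
have hKt : (fun l => K * tau (f l)) @ \oo --> 0.
  have := cvgM (cvg_cst K) ht; rewrite mulr0; apply.
have hsmall : \forall l \near \oo, n%:R * (tau (f l) * a) <= 1/2.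
  have h : (fun l => n%:R * a * tau (f l)) @ \oo --> 0.
    have := cvgM (cvg_cst (n%:R * a)) ht; rewrite mulr0; apply.
  have h2 : (0 : R) < 1/2 by lra.
  near=> l.
  have hl : n%:R * a * tau (f l) < 1/2.
    by near: l; exact: (cvgr_lt 0 h (1/2) h2).
  rewrite (_ : n%:R * (tau (f l) * a) = n%:R * a * tau (f l)); first exact: ltW.
  ring.
have hheat : forall i,
    (fun l => heatL r gam w (tau (f l)) (u (f l)) i) @ \oo --> v i.
  move=> i.
  have hd : (fun l => heatL r gam w (tau (f l)) (u (f l)) i - u (f l) i) @ \oo --> 0.
    apply: (@squeeze_cvgr _ _ _ _ (fun l => - (K * tau (f l))) (fun l => K * tau (f l))).
    - apply: filterS hsmall => l hl.
      have := @heat_close R n w r gam (tau (f l)) (u (f l)) i a (ltW (htau (f l))) a0 hL hl (hu (f l)).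
      rewrite ler_norml (_ : n%:R * (2 * (n%:R * (tau (f l) * a))) = K * tau (f l)) //.
      rewrite /K; ring.
    - have := cvgN hKt; rewrite oppr0; apply.
    - exact: hKt.
  have -> : (fun l => heatL r gam w (tau (f l)) (u (f l)) i) =
      (fun l => (heatL r gam w (tau (f l)) (u (f l)) i - u (f l) i) + u (f l) i).
    by apply/funext => l; rewrite subrK.
  rewrite -[X in _ --> X]add0r.
  exact: (cvgD hd (hv i)).
pose S := \sum_i deg w i `^ r * (1 - v i) * v i.
have hx : (fun l => ipV r w (fun i => 1 - u (f l) i)
             (heatL r gam w (tau (f l)) (u (f l)))) @ \oo --> S.
  rewrite /ipV; apply: cvg_sumI => i.
  apply: cvgM; last exact: hheat.
  apply: cvgM; first exact: cvg_cst.
  exact: (cvgB (cvg_cst (1 : R)) (hv i)).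
have hCt : (fun l => C * tau (f l)) @ \oo --> 0.
  have := cvgM (cvg_cst C) ht; rewrite mulr0; apply.
have hle : S <= 0.
  apply: (ler_cvg_to hx hCt); apply: nearW => l.
  have := hJ (f l); rewrite /Jtilde => hj.
  have tp := htau (f l).
  have e : tau (f l) * (tau (f l))^-1 = 1 by rewrite mulfV // gt_eqF.
  have := ler_wpM2l (ltW tp) hj; rewrite mulrA e mul1r [C * _]mulrC; apply.
have hterm : forall i, 0 <= deg w i `^ r * (1 - v i) * v i.
  move=> i; have /andP[h0 h1] := v01 i.
  apply: mulr_ge0; last by [].
  apply: mulr_ge0; first exact: powR_ge0.
  lra.
have hS0 : S = 0.
  apply/eqP; rewrite eq_le hle /=; exact: sumr_ge0.
have hv01 : forall i, v i = 0 \/ v i = 1.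
  move=> i.
  have := @psumr_eq0P _ _ predT (fun i => deg w i `^ r * (1 - v i) * v i)
            (fun i _ => hterm i) hS0 i erefl.
  have dp : 0 < deg w i `^ r by apply: powR_gt0; exact: deg_gt0.
  move/eqP; rewrite !mulf_eq0 (negbTE (lt0r_neq0 dp)) /= subr_eq0.
  by case/orP => /eqP h; [right | left].
exists f, v; split => //.
have hn : (fun l => ipV r w (fun i => u (f l) i - v i) (fun i => u (f l) i - v i))
            @ \oo --> 0.
  have -> : (0 : R) = \sum_i deg w i `^ r * (v i - v i) * (v i - v i).
    by rewrite big1 // => i _; rewrite subrr !mulr0.
  rewrite /ipV; apply: cvg_sumI => i.
  apply: cvgM; [apply: cvgM; first exact: cvg_cst|];
    exact: (cvgB (hv i) (cvg_cst (v i))).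
rewrite /normV -sqrtr0.
exact: (cvg_comp _ _ hn (@sqrt_continuous R 0)).
Unshelve. all: end_near.
Qed.
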